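(* Let $\mathcal G$ be a Lie superalgebra over a field of characteristic zero and let $\mathcal S\subseteq\mathcal U_{1-}$ be the space of symmetric operators on $\mathcal U_1=\mathcal G$ described below. If $A,B\in\mathcal S$, then $[A,B]\in\mathcal S$, where $[\cdot,\cdot]$ is the extended bracket described below.
   Context: Set $\mathcal U_1=\mathcal G$ with its $\mathbb Z_2$-grading. For $p\ge1$ define recursively $\mathcal U_{-p+1}=\mathrm{Hom}(\mathcal U_1,\mathcal U_{-p+2})$, $\mathbb Z_2$-graded by declaring $A$ even (resp. odd) if it preserves (resp. reverses) parity; $|u|$ is the parity of a homogeneous element, and sign formulas are for homogeneous elements extended bilinearly. Elements of $\mathcal U_{1-p}$ are operators of order $p$ (elements of $\mathcal G$ have order $0$), and an operator $A$ of order $p\ge1$ is identified with the $p$-linear map $A(x_1,\dots,x_p)=A(x_1)(x_2)\cdots(x_p)$; $\mathcal U_{1-}=\bigoplus_{p\ge0}\mathcal U_{1-p}$. An operator of order $p\ge2$ is symmetric if it is graded symmetric: $A(\dots,x_i,x_{i+1},\dots)=(-1)^{|x_i||x_{i+1}|}A(\dots,x_{i+1},x_i,\dots)$ for all homogeneous arguments and all $i$; all operators of order $0$ or $1$ are symmetric; $\mathcal S=\bigoplus_{p\ge0}\mathcal S_{1-p}$ where $\mathcal S_{1-p}$ is the space of symmetric operators of order $p$. Define $\circ$: $A\circ y=A(y)$, $y\circ A=0$ for $A$ of order $\ge1$ and $y\in\mathcal U_1$; for $A,B$ of orders $\ge1$, recursively $(A\circ B)(x)=A\circ B(x)+(-1)^{|B||x|}A(x)\circ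 B$. Define $\bullet$: $A_p\bullet B_q=\frac{p!q!}{(p+q-1)!}A_p\circ B_q$ for orders $p,q\ge1$; $A_p\bullet x=pA_p(x)$, $x\bullet A_p=0$, $x\bullet y=0$ for $x,y\in\mathcal U_1$. The bracket of $\mathcal G$ is extended to $\mathcal U_{1-}$: on $\mathcal G$ it is the given bracket, and for operators $A,B$ of orders $p,q$ with $p+q\ge1$, $[A,B]$ is the operator of order $p+q$ defined recursively by $[A,B]\bullet x=[A,B\bullet x]+(-1)^{|x||B|}[A\bullet x,B]$ for all $x\in\mathcal G$. *)

(* Defs.v *)
From HB Require Import structures.
From mathcomp Require Import all_boot all_order all_algebra.
Set Implicit Arguments. Unset Strict Implicit. Unset Printing Implicit Defensive.
Import Order.TTheory GRing.Theory Num.Theory.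
Local Open Scope ring_scope.

(* A Z2-graded vector space over K is modelled as G = V0 * V1,
   V0 = even part, V1 = odd part. *)
Section Graded.
Variables (K : fieldType) (V0 V1 : lmodType K).
Notation G := (V0 * V1)%type.

Definition homog (b : bool) (x : G) : Prop :=
  if b then x.1 = 0 else x.2 = 0.

Definition even_part (x : G) : G := (x.1, 0).
Definition odd_part (x : G) : G := (0, x.2).

Definition psign (x : G) : G := (x.1, - x.2).

Definition is_lie_superalgebra (br : G -> G -> G) : Prop :=
  [/\ (forall (a : K) (x y z : G), br (a *: x + y) z = a *: br x z + br y z),
      (forall (a : K) (x y z : G), br z (a *: x + y) = a *: br z x + br z y),
      (forall (a b : bool) (x y : G), homog a x -> homog b y -> homog (a (+) b) (br x y)),
      (forall (a b : bool) (x y : G), homog a x -> homog b y ->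
          br x y = - ((-1) ^+ (a && b) *: br y x))
    & (forall (a b c : bool) (x y z : G), homog a x -> homog b y -> homog c z ->
          br x (br y z) = br (br x y) z + (-1) ^+ (a && b) *: br y (br x z))].

(* Operators: an operator of order p is the p-linear map
   A(x1,...,xp) = A(x1)(x2)...(xp), represented as a function on lists
   (only its values on lists of length p matter).  An element y of G
   (order 0) is represented by any A with A [::] = y. *)
Definition operator := seq G -> G.

Definition multilinear (p : nat) (A : operator) : Prop :=
  forall (xs ys : seq G), size xs + size ys + 1 = p ->
    forall (a : K) (x y : G),
      A (xs ++ (a *: x + y) :: ys) = a *: A (xs ++ x :: ys) + A (xs ++ y :: ys).

Definition graded_symmetric (p : nat) (A : operator) : Prop :=
  forall (xs ys : seq G), size xs + size ys + 2 = p ->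
    forall (a b : bool) (x y : G), homog a x -> homog b y ->
      A (xs ++ x :: y :: ys) = (-1) ^+ (a && b) *: A (xs ++ y :: x :: ys).

Definition symmetric_op (p : nat) (A : operator) : Prop :=
  multilinear p A /\ graded_symmetric p A.

Definition app1 (A : operator) (x : G) : operator := fun ys => A (x :: ys).

(* A_p • x = p A_p(x) for p >= 1, and y • x = 0 for y of order 0 *)
Definition dotx (p : nat) (A : operator) (x : G) : operator :=
  fun ys => p%:R *: A (x :: ys).

(* (-1)^{|B|} B for homogeneous B, extended linearly *)
Definition sign_op (B : operator) : operator :=
  fun xs => psign (B (map psign xs)).

Variable br : G -> G -> G.

(* The extended bracket, by recursion on the total order n = p + q:
   [A,B] • x = [A, B • x] + (-1)^{|x||B|} [A • x, B],
   with [A,B] • x = (p+q) [A,B](x); the sign factor is extended bilinearly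
   by splitting x into its even and odd parts. *)
Fixpoint ext_br (n p q : nat) (A B : operator) (xs : seq G) {struct n} : G :=
  match n, xs with
  | 0, _ => br (A [::]) (B [::])
  | n'.+1, x :: xs' =>
      (n'.+1%:R)^-1 *:
        ((if q is q'.+1 then ext_br n' p q' A (dotx q B x) xs' else 0)
         + (if p is p'.+1 then
              ext_br n' p' q (dotx p A (even_part x)) B xs'
              + ext_br n' p' q (dotx p A (odd_part x)) (sign_op B) xs'
            else 0))
  | _.+1, [::] => 0
  end.

Definition bracket (p q : nat) (A B : operator) : operator :=
  ext_br (p + q) p q A B.

End Graded.

(* Main.v *)
Require Import Defs.
From HB Require Import structures.
From mathcomp Require Import all_boot all_order all_algebra.
From mathcomp Require Import zify.
From Stdlib Require Import FunctionalExtensionality.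
Import Order.TTheory GRing.Theory Num.Theory.
Local Open Scope ring_scope.

Section Main.
Variables (K : fieldType) (V0 V1 : lmodType K).
Notation G := (V0 * V1)%type.
Notation op := (operator V0 V1).
Variable br : G -> G -> G.
Hypothesis br_l : forall (a : K) (x y z : G), br (a *: x + y) z = a *: br x z + br y z.
Hypothesis br_r : forall (a : K) (x y z : G), br z (a *: x + y) = a *: br z x + br z y.

Notation E := (ext_br br).

Definition signB (a : bool) (B : op) : op := if a then sign_op B else B.

Lemma pairE (u v : G) : u.1 = v.1 -> u.2 = v.2 -> u = v.
Proof. by case: u; case: v => ? ? ? ? /= -> ->. Qed.

Lemma psignL (c : K) (x y : G) : psign (c *: x + y) = c *: psign x + psign y.
Proof. apply: pairE => //=. by rewrite opprD scalerN. Qed.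

Lemma psignZ (c : K) (u : G) : psign (c *: u) = c *: psign u.
Proof. apply: pairE => //=. by rewrite scalerN. Qed.

Lemma psign0 : psign 0 = 0 :> G.
Proof. apply: pairE => //=. by rewrite oppr0. Qed.

Lemma psignK (u : G) : psign (psign u) = u.
Proof. apply: pairE => //=. by rewrite opprK. Qed.

Lemma psign_hom b (y : G) : homog b y -> psign y = (-1) ^+ b *: y.
Proof.
case: b => /= Hy.
- rewrite expr1 scaleN1r; apply: pairE => /=; last by [].
  by rewrite Hy oppr0.
- rewrite expr0 scale1r; apply: pairE => //=. by rewrite Hy oppr0.
Qed.

Lemma psign_homog b (y : G) : homog b y -> homog b (psign y).
Proof. case: b => /= Hy //. by rewrite Hy oppr0. Qed.

Lemma evenL (c : K) (x y : G) : even_part (c *: x + y) = c *: even_part x + even_part y.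
Proof. apply: pairE => //=. by rewrite scaler0 addr0. Qed.

Lemma oddL (c : K) (x y : G) : odd_part (c *: x + y) = c *: odd_part x + odd_part y.
Proof. apply: pairE => //=. by rewrite scaler0 addr0. Qed.

Lemma br0l z : br 0 z = 0.
Proof. have := br_l (-1) 0 0 z. by rewrite scaler0 addr0 scaleN1r addNr. Qed.

Lemma br0r z : br z 0 = 0.
Proof. have := br_r (-1) 0 0 z. by rewrite scaler0 addr0 scaleN1r addNr. Qed.

Lemma dotx0 (A : op) x : dotx 0 A x = fun _ => 0.
Proof. apply: functional_extensionality => l. by rewrite /dotx scale0r. Qed.

Lemma dotxz p x : dotx p (fun _ : seq G => 0 : G) x = fun _ => 0.
Proof. apply: functional_extensionality => l. by rewrite /dotx scaler0. Qed.

Lemma signz : sign_op (fun _ : seq G => 0 : G) = fun _ => 0.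
Proof. apply: functional_extensionality => l. by rewrite /sign_op psign0. Qed.

Lemma signB0 b : signB b (fun _ : seq G => 0 : G) = fun _ => 0.
Proof. case: b => //=; exact: signz. Qed.

Lemma dotxD p (A1 A2 : op) (c : K) x :
  dotx p (fun l => c *: A1 l + A2 l) x = fun l => c *: dotx p A1 x l + dotx p A2 x l.
Proof.
apply: functional_extensionality => l.
by rewrite /dotx scalerDr !scalerA mulrC.
Qed.

Lemma signD (B1 B2 : op) (c : K) :
  sign_op (fun l => c *: B1 l + B2 l) = fun l => c *: sign_op B1 l + sign_op B2 l.
Proof. apply: functional_extensionality => l. by rewrite /sign_op psignL. Qed.

Lemma EzA n : forall p q (B : op) xs, E n p q (fun _ => 0) B xs = 0.
Proof.
elim: n => [|n IH] p q B xs; first by rewrite /= br0l.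
case: xs => [|x xs] //=.
case: q => [|q]; case: p => [|p] /=; rewrite ?dotxz ?IH ?addr0 ?scaler0 //.
Qed.

Lemma EzB n : forall p q (A : op) xs, E n p q A (fun _ => 0) xs = 0.
Proof.
elim: n => [|n IH] p q A xs; first by rewrite /= br0r.
case: xs => [|x xs] //=.
case: q => [|q]; case: p => [|p] /=; rewrite ?dotxz ?signz ?IH ?addr0 ?scaler0 //.
Qed.

Lemma alg2 (k c : K) (Q Q1 Q2 P P1 P2 : G) :
  Q = c *: Q1 + Q2 -> P = c *: P1 + P2 ->
  k *: (Q + P) = c *: (k *: (Q1 + P1)) + k *: (Q2 + P2).
Proof.
move=> -> ->. rewrite !scalerDr !scalerA [k * c]mulrC.
by rewrite addrACA.
Qed.

Lemma addlin (c : K) (E1 E2 a1 a2 b1 b2 : G) :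
  E1 = c *: a1 + b1 -> E2 = c *: a2 + b2 -> E1 + E2 = c *: (a1 + a2) + (b1 + b2).
Proof. move=> -> ->. by rewrite scalerDr addrACA. Qed.

Lemma zlin (c : K) : (0 : G) = c *: 0 + 0.
Proof. by rewrite scaler0 addr0. Qed.

Lemma LA n : forall p q (A1 A2 B : op) (c : K) xs,
  E n p q (fun l => c *: A1 l + A2 l) B xs = c *: E n p q A1 B xs + E n p q A2 B xs.
Proof.
elim: n => [|n IH] p q A1 A2 B c xs; first by rewrite /= br_l.
case: xs => [|x xs] /=; first by rewrite scaler0 addr0.
apply: alg2.
- case: q => [|q] /=; [exact: zlin | exact: IH].
- case: p => [|p] /=; first exact: zlin.
  by apply: addlin; rewrite dotxD IH.
Qed.

Lemma LB n : forall p q (A B1 B2 : op) (c : K) xs,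
  E n p q A (fun l => c *: B1 l + B2 l) xs = c *: E n p q A B1 xs + E n p q A B2 xs.
Proof.
elim: n => [|n IH] p q A B1 B2 c xs; first by rewrite /= br_r.
case: xs => [|x xs] /=; first by rewrite scaler0 addr0.
apply: alg2.
- case: q => [|q] /=; first exact: zlin.
  by rewrite dotxD IH.
- case: p => [|p] /=; first exact: zlin.
  by apply: addlin; rewrite ?signD IH.
Qed.

Lemma EsA n p q (A B : op) (c : K) xs :
  E n p q (fun l => c *: A l) B xs = c *: E n p q A B xs.
Proof.
have -> : (fun l => c *: A l) = (fun l => c *: A l + (fun _ => 0) l).
  by apply: functional_extensionality => l; rewrite addr0.
by rewrite LA EzA addr0.
Qed.

Lemma EsB n p q (A B : op) (c : K) xs :
  E n p q A (fun l => c *: B l) xs = c *: E n p q A B xs.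
Proof.
have -> : (fun l => c *: B l) = (fun l => c *: B l + (fun _ => 0) l).
  by apply: functional_extensionality => l; rewrite addr0.
by rewrite LB EzB addr0.
Qed.

Lemma E_cons_gen n p q (A B : op) x ys :
  E n.+1 p q A B (x :: ys) = n.+1%:R^-1 *: (E n p q.-1 A (dotx q B x) ys +
    (E n p.-1 q (dotx p A (even_part x)) B ys + E n p.-1 q (dotx p A (odd_part x)) (sign_op B) ys)).
Proof.
rewrite /=; case: q => [|q]; case: p => [|p] //=; rewrite ?dotx0 ?EzA ?EzB ?addr0 //.
Qed.

Lemma L1 n : forall p q (A A' B B' : op) xs, (p + q)%N = n -> size xs = n ->
  (forall l, size l = p -> A l = A' l) -> (forall l, size l = q -> B l = B' l) ->
  E n p q A B xs = E n p q A' B' xs.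
Proof.
elim: n => [|n IH] p q A A' B B' xs.
- case: p => //; case: q => // _; case: xs => // _ HA HB /=.
  by rewrite HA // HB.
- move=> Hpq; case: xs => // x xs [Hs] HA HB. rewrite !E_cons_gen.
  congr (_ *: (_ + (_ + _))).
  + case: q Hpq HB => [|q] Hpq HB; first by rewrite /= !dotx0 !EzB.
    apply: IH => //=; first lia.
    by move=> l Hl; rewrite /dotx HB //= Hl.
  + case: p Hpq HA => [|p] Hpq HA; first by rewrite !dotx0 !EzA.
    apply: IH => //=; first lia.
    by move=> l Hl; rewrite /dotx HA //= Hl.
  + case: p Hpq HA => [|p] Hpq HA; first by rewrite !dotx0 !EzA.
    apply: IH => //=; first lia.
    * by move=> l Hl; rewrite /dotx HA //= Hl.
    * by move=> l Hl; rewrite /sign_op HB // size_map.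
Qed.

Lemma ml_zero p (A : op) l : multilinear p.+1 A -> size l = p -> A (0 :: l) = 0.
Proof.
move=> HA Hl. have Hs : size (@nil G) + size l + 1 = p.+1 by rewrite Hl /=; lia.
have := HA [::] l Hs (-1) 0 0.
by rewrite /= scaler0 addr0 scaleN1r addNr.
Qed.

Lemma ml_scale p (A : op) l (c : K) x : multilinear p.+1 A -> size l = p ->
  A (c *: x :: l) = c *: A (x :: l).
Proof.
move=> HA Hl. have Hs : size (@nil G) + size l + 1 = p.+1 by rewrite Hl /=; lia.
have := HA [::] l Hs c x 0.
by rewrite /= addr0 (ml_zero _ _ _ HA Hl) addr0.
Qed.

Lemma E_cons_hom n p q (A B : op) a x ys : (p + q)%N = n.+1 -> size ys = n ->
  multilinear p A -> homog a x ->
  E n.+1 p q A B (x :: ys) = n.+1%:R^-1 *: (E n p q.-1 A (dotx q B x) ys +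
     E n p.-1 q (dotx p A x) (signB a B) ys).
Proof.
move=> Hpq Hs HA Hx; rewrite E_cons_gen; congr (_ *: (_ + _)).
case: p Hpq HA => [|p] Hpq HA; first by rewrite !dotx0 !EzA addr0.
have Hz : forall B', E n p q (dotx p.+1 A 0) B' ys = 0.
  move=> B'; rewrite (@L1 n p q _ (fun _ => 0) B' B') ?EzA //=; first lia.
  by move=> l Hl; rewrite /dotx (ml_zero _ _ _ HA Hl) scaler0.
case: a Hx => /= Hx.
- have -> : even_part x = 0 by apply: pairE => //=.
  have -> : odd_part x = x by apply: pairE => //=; rewrite Hx.
  by rewrite Hz add0r.
- have -> : odd_part x = 0 by apply: pairE => //=.
  have -> : even_part x = x by apply: pairE => //=; rewrite Hx.
  by rewrite Hz addr0.
Qed.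

Lemma symD n (F H : op) : symmetric_op n F -> symmetric_op n H ->
  symmetric_op n (fun l => F l + H l).
Proof.
move=> [F1 F2] [H1 H2]; split.
- move=> xs ys Hs c x y. rewrite F1 // H1 //. by rewrite scalerDr addrACA.
- move=> xs ys Hs a b x y Hx Hy. by rewrite (F2 _ _ Hs a b) // (H2 _ _ Hs a b) // scalerDr.
Qed.

Lemma symZ n (F : op) (k : K) : symmetric_op n F -> symmetric_op n (fun l => k *: F l).
Proof.
move=> [F1 F2]; split.
- move=> xs ys Hs c x y. rewrite F1 // scalerDr !scalerA. by rewrite [k * c]mulrC.
- move=> xs ys Hs a b x y Hx Hy. rewrite (F2 _ _ Hs a b) // !scalerA. by rewrite mulrC.
Qed.

Lemma sym0 n : symmetric_op n (fun _ : seq G => 0 : G).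
Proof. split; move=> *; by rewrite ?scaler0 ?addr0. Qed.

Lemma symext n (F H : op) : (forall l, F l = H l) -> symmetric_op n H -> symmetric_op n F.
Proof. move=> e; have -> // : F = H. exact: functional_extensionality. Qed.

Lemma sym_dotx q (B : op) x : symmetric_op q B -> symmetric_op q.-1 (dotx q B x).
Proof.
case: q => [|q] HB; first by rewrite dotx0; exact: sym0.
case: HB => [B1 B2]; split.
- move=> xs ys Hs c y z. rewrite /dotx -!cat_cons B1 /=; last lia.
  by rewrite scalerDr !scalerA mulrC.
- move=> xs ys Hs a b y z Hy Hz. rewrite /dotx -!cat_cons (B2 _ _ _ a b) //=; last lia.
  by rewrite !scalerA mulrC.
Qed.

Lemma sym_sign q (B : op) : symmetric_op q B -> symmetric_op q (sign_op B).
Proof.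
case=> [B1 B2]; split.
- move=> xs ys Hs c x y. rewrite /sign_op !map_cat /= psignL B1 ?size_map //.
  by rewrite psignL.
- move=> xs ys Hs a b x y Hx Hy. rewrite /sign_op !map_cat /=.
  rewrite (B2 _ _ _ a b) ?size_map ?psignZ //; exact: psign_homog.
Qed.

Lemma sym_signB a q (B : op) : symmetric_op q B -> symmetric_op q (signB a B).
Proof. case: a => //=; exact: sym_sign. Qed.

Lemma ml_cons n (F : op) :
  (forall z, multilinear n (fun l => F (z :: l))) ->
  (forall ys, size ys = n -> forall (c : K) x y, F ((c *: x + y) :: ys) = c *: F (x :: ys) + F (y :: ys)) ->
  multilinear n.+1 F.
Proof.
move=> H1 H0 [|z xs] ys Hs c x y.
- apply: H0. move: Hs. rewrite /=. lia.
- apply: (H1 z xs ys). move: Hs. rewrite /=. lia.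
Qed.

Lemma gs_cons n (F : op) :
  (forall z, graded_symmetric n (fun l => F (z :: l))) ->
  (forall ys, (size ys).+1 = n -> forall a b x y, homog a x -> homog b y ->
      F (x :: y :: ys) = (-1) ^+ (a && b) *: F (y :: x :: ys)) ->
  graded_symmetric n.+1 F.
Proof.
move=> H1 H0 [|z xs] ys Hs a b x y Hx Hy /=.
- apply: H0 => //. move: Hs. rewrite /=. lia.
- apply: (H1 z xs ys) => //. move: Hs. rewrite /=. lia.
Qed.

Lemma dotx_ml q (B : op) l (c : K) x y : multilinear q.+1 B -> size l = q ->
  dotx q.+1 B (c *: x + y) l = c *: dotx q.+1 B x l + dotx q.+1 B y l.
Proof.
move=> HB Hl. rewrite /dotx (HB [::] l) /=; last lia.
by rewrite scalerDr !scalerA mulrC.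
Qed.

Lemma EdotB n p q (A B : op) ys (c : K) x y : (p + q)%N = n.+1 -> size ys = n ->
  multilinear q B ->
  E n p q.-1 A (dotx q B (c *: x + y)) ys =
  c *: E n p q.-1 A (dotx q B x) ys + E n p q.-1 A (dotx q B y) ys.
Proof.
case: q => [|q] Hpq Hs HB; first by rewrite /= !dotx0 !EzB scaler0 addr0.
rewrite -LB. apply: L1 => //=; first lia.
move=> l Hl. exact: dotx_ml.
Qed.

Lemma EdotA n p q (A B : op) ys (c : K) x y : (p + q)%N = n.+1 -> size ys = n ->
  multilinear p A ->
  E n p.-1 q (dotx p A (c *: x + y)) B ys =
  c *: E n p.-1 q (dotx p A x) B ys + E n p.-1 q (dotx p A y) B ys.
Proof.
case: p => [|p] Hpq Hs HA; first by rewrite /= !dotx0 !EzA scaler0 addr0.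
rewrite -LA. apply: L1 => //=; first lia.
move=> l Hl. exact: dotx_ml.
Qed.

Lemma ML0 n p q (A B : op) ys (c : K) x y : (p + q)%N = n.+1 -> size ys = n ->
  symmetric_op p A -> symmetric_op q B ->
  E n.+1 p q A B ((c *: x + y) :: ys) = c *: E n.+1 p q A B (x :: ys) + E n.+1 p q A B (y :: ys).
Proof.
move=> Hpq Hs [HA _] [HB _].
rewrite !E_cons_gen evenL oddL. apply: alg2; first exact: EdotB.
by apply: addlin; apply: EdotA.
Qed.

Lemma DS q (B : op) a b y l : homog b y -> multilinear q.+1 B -> size l = q ->
  dotx q.+1 (signB a B) y l = (-1) ^+ (a && b) *: signB a (dotx q.+1 B y) l.
Proof.
move=> Hy HB Hl. case: a => /=; last by rewrite expr0 scale1r.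
rewrite /dotx /sign_op /= (psign_hom _ _ Hy) (ml_scale _ _ _ _ _ HB) ?size_map //.
by rewrite !psignZ !scalerA mulrC.
Qed.

Lemma sc3 (a b s : K) (u : G) : a *: (b *: (s *: u)) = s *: (a *: (b *: u)).
Proof. by rewrite !scalerA mulrC mulrA. Qed.

Lemma alg4 (k1 k2 s : K) (Qx Px Qy Py T1 T2 T3 T4 U1 U2 U3 U4 : G) :
  Qx = k2 *: (T1 + T2) -> Px = k2 *: (T3 + T4) ->
  Qy = k2 *: (U1 + U2) -> Py = k2 *: (U3 + U4) ->
  T1 = s *: U1 -> T2 = s *: U3 -> T3 = s *: U2 -> T4 = s *: U4 ->
  k1 *: (Qx + Px) = s *: (k1 *: (Qy + Py)).
Proof.
move=> -> -> -> -> -> -> -> ->.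
rewrite !scalerDr !scalerA.
have e : k1 * k2 * s = s * k1 * k2 by rewrite mulrC mulrA.
by rewrite e addrACA.
Qed.

Lemma Qexp m p q (A B : op) x y b ys : (p + q)%N = m.+2 -> size ys = m ->
  multilinear p A -> homog b y ->
  E m.+1 p q.-1 A (dotx q B x) (y :: ys) = m.+1%:R^-1 *:
    (E m p q.-2 A (dotx q.-1 (dotx q B x) y) ys +
     E m p.-1 q.-1 (dotx p A y) (signB b (dotx q B x)) ys).
Proof.
case: q => [|q] Hpq Hs HA Hy.
- by rewrite !dotx0 signB0 !EzB addr0 scaler0.
- apply: E_cons_hom => //. lia.
Qed.

Lemma Pexp m p q (A B : op) x y a b ys : (p + q)%N = m.+2 -> size ys = m ->
  symmetric_op p A -> homog b y ->
  E m.+1 p.-1 q (dotx p A x) (signB a B) (y :: ys) = m.+1%:R^-1 *: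
    (E m p.-1 q.-1 (dotx p A x) (dotx q (signB a B) y) ys +
     E m p.-2 q (dotx p.-1 (dotx p A x) y) (signB b (signB a B)) ys).
Proof.
case: p => [|p] Hpq Hs HA Hy.
- by rewrite !dotx0 !EzA addr0 scaler0.
- apply: E_cons_hom => //; first lia.
  exact: (sym_dotx _ _ x HA).1.
Qed.

Lemma SYM0 n p q (A B : op) ys a b x y : (p + q)%N = n.+1 -> (size ys).+1 = n ->
  symmetric_op p A -> symmetric_op q B -> homog a x -> homog b y ->
  E n.+1 p q A B (x :: y :: ys) = (-1) ^+ (a && b) *: E n.+1 p q A B (y :: x :: ys).
Proof.
move=> Hpq Hs HA HB Hx Hy. subst n.
rewrite (E_cons_hom _ _ _ _ _ _ _ (y :: ys) Hpq (erefl _) HA.1 Hx).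
rewrite (E_cons_hom _ _ _ _ _ _ _ (x :: ys) Hpq (erefl _) HA.1 Hy).
have H1 := Qexp _ _ _ _ B x _ _ _ Hpq (erefl _) HA.1 Hy.
have H2 := Pexp _ _ _ _ B x _ a _ _ Hpq (erefl _) HA Hy.
have H3 := Qexp _ _ _ _ B y _ _ _ Hpq (erefl _) HA.1 Hx.
have H4 := Pexp _ _ _ _ B y _ b _ _ Hpq (erefl _) HA Hx.
apply: (alg4 _ _ _ _ _ _ _ _ _ _ _ _ _ _ _ H1 H2 H3 H4); clear H1 H2 H3 H4.
-
  case: q Hpq HB => [|[|q]] Hpq HB /=.
  + by rewrite !dotx0 !EzB scaler0.
  + by rewrite !dotx0 !EzB scaler0.
  + rewrite -EsB. apply: L1 => //=; first lia.
    move=> l Hl. rewrite /dotx (HB.2 [::] l _ a b) //=; last lia.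
    by rewrite sc3.
-
  case: q Hpq HB => [|q] Hpq HB /=; first by rewrite !dotx0 signB0 !EzB scaler0.
  case: p Hpq HA => [|p] Hpq HA /=; first by rewrite !dotx0 !EzA scaler0.
  rewrite -EsB. apply: L1 => //=; first lia.
  move=> l Hl. rewrite (DS _ _ _ _ _ _ Hx HB.1 Hl) andbC. by rewrite signrZK.
-
  case: q Hpq HB => [|q] Hpq HB /=; first by rewrite !dotx0 signB0 !EzB scaler0.
  case: p Hpq HA => [|p] Hpq HA /=; first by rewrite !dotx0 !EzA scaler0.
  rewrite -EsB. apply: L1 => //=; first lia.
  move=> l Hl. exact: (DS _ _ _ _ _ _ Hy HB.1 Hl).
-
  case: p Hpq HA => [|[|p]] Hpq HA /=.
  + by rewrite !dotx0 !EzA scaler0.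
  + by rewrite !dotx0 !EzA scaler0.
  + have -> : signB b (signB a B) = signB a (signB b B) by destruct a, b.
    rewrite -EsA. apply: L1 => //=; first lia.
    move=> l Hl. rewrite /dotx (HA.2 [::] l _ a b) //=; last lia.
    by rewrite sc3.
Qed.

Lemma symE n : forall p q (A B : op), (p + q)%N = n ->
  symmetric_op p A -> symmetric_op q B -> symmetric_op n (E n p q A B).
Proof.
elim: n => [|n IH] p q A B Hpq HA HB.
- split => xs ys Hs; exfalso; lia.
- have Hz : forall z, symmetric_op n (fun l => E n.+1 p q A B (z :: l)).
    move=> z.
    apply: (symext _ _ (fun l => n.+1%:R^-1 *: (E n p q.-1 A (dotx q B z) l +
      (E n p.-1 q (dotx p A (even_part z)) B l + E n p.-1 q (dotx p A (odd_part z)) (sign_op B) l)))).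
      by move=> l; exact: E_cons_gen.
    apply: symZ; apply: symD; [|apply: symD].
    + case: q Hpq HB => [|q] Hpq HB.
        apply: (symext _ _ (fun _ => 0)); last exact: sym0.
        by move=> l; rewrite dotx0 EzB.
      apply: IH => //; [lia | exact: sym_dotx].
    + case: p Hpq HA => [|p] Hpq HA.
        apply: (symext _ _ (fun _ => 0)); last exact: sym0.
        by move=> l; rewrite dotx0 EzA.
      apply: IH => //; [lia | exact: sym_dotx].
    + case: p Hpq HA => [|p] Hpq HA.
        apply: (symext _ _ (fun _ => 0)); last exact: sym0.
        by move=> l; rewrite dotx0 EzA.
      apply: IH => //; [lia | exact: sym_dotx | exact: sym_sign].
  split.
  + apply: ml_cons; first by move=> z; exact: (Hz z).1.
    move=> ys Hs c x y. exact: ML0.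
  + apply: gs_cons; first by move=> z; exact: (Hz z).2.
    move=> ys Hs a b x y Hx Hy. exact: SYM0.
Qed.

Lemma sym_sum n m (F : 'I_m -> op) : (forall i, symmetric_op n (F i)) ->
  symmetric_op n (fun xs => \sum_(i < m) F i xs).
Proof.
move=> HF; split.
- move=> xs ys Hs c x y.
  rewrite (eq_bigr (fun i : 'I_m => c *: F i (xs ++ x :: ys) + F i (xs ++ y :: ys))).
    by rewrite big_split /= scaler_sumr.
  by move=> i _; rewrite (HF i).1.
- move=> xs ys Hs a b x y Hx Hy.
  rewrite scaler_sumr. apply: eq_bigr => i _. exact: (HF i).2.
Qed.

End Main.

Theorem proposition4p2 (K : fieldType) (V0 V1 : lmodType K)
  (br : (V0 * V1)%type -> (V0 * V1)%type -> (V0 * V1)%type) :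
  [pchar K] =i pred0 ->
  is_lie_superalgebra br ->
  forall (A B : nat -> operator V0 V1),
    (forall p, symmetric_op p (A p)) ->
    (forall q, symmetric_op q (B q)) ->
    forall r : nat,
      symmetric_op r
        (fun xs => \sum_(p < r.+1) bracket br p (r - p)%N (A p) (B (r - p)%N) xs).
Proof.
move=> _ [Hl Hr _ _ _] A B HA HB r.
pose F := fun i : nat => bracket br i (r - i)%N (A i) (B (r - i)%N).
have H : forall i : 'I_r.+1, symmetric_op r (F i).
  move=> i. have Hi : (i + (r - i))%N = r by have := ltn_ord i; lia.
  have := @symE _ _ _ br Hl Hr _ _ _ _ _ Hi (HA i) (HB (r - i)%N).
  by rewrite /F /bracket Hi.
exact: (@sym_sum K V0 V1 r r.+1 (fun i : 'I_r.+1 => F i) H).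
Qed.
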